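(* Let $A$ be a commutative ring, $r,d\ge1$, $B=A[x_1,\dots,x_r]$, let $x^\alpha\in B$ be a monomial and $k,m$ positive integers with $k\le d$. If $km\le d$ then $$\gamma^k(x^{m\alpha})\times\gamma^{d-k}(1)-(-1)^{km-k}m\,\gamma^{km}(x^\alpha)\times\gamma^{d-km}(1)\in\Gamma^d_A(B)_{<km\alpha},$$ and if $km>d$ then $\gamma^k(x^{m\alpha})\times\gamma^{d-k}(1)\in\Gamma^d_A(B)_{<km\alpha}$.
   Context: $\Gamma^d_A(B)$ is identified with the ring of symmetric tensors $\mathrm{TS}^d_A(B)=(B^{\otimes_A d})^{\mathfrak S_d}$ (componentwise multiplication). For a monomial $f$ and $0\le k\le d$, $\gamma^k(f)\times\gamma^{d-k}(1)$ denotes the sum of all distinct tensors obtained by permuting the factors of $f^{\otimes k}\otimes1^{\otimes(d-k)}$, i.e. $\sum_{S\subseteq\{1..d\},|S|=k}\bigotimes_{j=1}^d f_j$ with $f_j=f$ for $j\in S$ and $f_j=1$ otherwise. $B^{\otimes d}$ is $\mathbb{N}^r$-graded by giving $x^{\beta_1}\otimes\dots\otimes x^{\beta_d}$ multidegree $\beta_1+\dots+\beta_d$; this induces an $\mathbb{N}^r$-grading of $\Gamma^d_A(B)$. For $\gamma\in\mathbb{N}^r$, $\Gamma^d_A(B)_{<\gamma}$ is the $A$-subalgebra generated by the homogeneous elements of multidegree $\beta$ with $\beta<\gamma$, where $\beta<\gamma$ means $\beta\le\gamma$ componentwise and $\beta\ne\gamma$. *)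

(* Defs.v *)
From HB Require Import structures.
From mathcomp Require Import all_boot all_algebra fingroup perm.
From mathcomp Require Import mpoly.
Set Implicit Arguments. Unset Strict Implicit. Unset Printing Implicit Defensive.
Import GRing.Theory.
Local Open Scope ring_scope.

(* B^{(x)_A d} is realized (canonically) as
   the polynomial ring A[x_{j,i} | j < d, i < r], with variables indexed by
   'I_d * 'I_r through enum_rank.  The j-th tensor factor embedding sends
   x_i to x_{j,i}; f_1 (x) ... (x) f_d = \prod_j emb j f_j. *)

Definition tidx (d r : nat) : nat := #|{: 'I_d * 'I_r}|.

Definition tvar (d r : nat) (j : 'I_d) (i : 'I_r) : 'I_(tidx d r) :=
  enum_rank (j, i).

Definition emb (A : comNzRingType) (d r : nat) (j : 'I_d) (f : {mpoly A[r]})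
  : {mpoly A[tidx d r]} :=
  f \mPo [tuple 'X_(tvar j i) | i < r].

(* gamma^k(f) x gamma^{d-k}(1) : sum over k-subsets S of positions of
   the tensor with f in positions of S and 1 elsewhere *)
Definition gamma_times_one (A : comNzRingType) (d r : nat) (f : {mpoly A[r]})
  (k : nat) : {mpoly A[tidx d r]} :=
  \sum_(S : {set 'I_d} | #|S| == k) \prod_(j in S) emb j f.

Definition perm_tensor (A : comNzRingType) (d r : nat) (s : 'S_d)
  (p : {mpoly A[tidx d r]}) : {mpoly A[tidx d r]} :=
  p \mPo [tuple 'X_(tvar (s (enum_val k).1) (enum_val k).2) | k < tidx d r].

(* symmetric tensors TS^d_A(B) = Gamma^d_A(B) *)
Definition symmetric_tensor (A : comNzRingType) (d r : nat)
  (p : {mpoly A[tidx d r]}) : Prop :=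
  forall s : 'S_d, perm_tensor s p = p.

(* N^r-multidegree of the tensor monomial x^{b_1} (x) ... (x) x^{b_d}:
   b_1 + ... + b_d *)
Definition tmdeg (d r : nat) (m : 'X_{1..tidx d r}) (i : 'I_r) : nat :=
  (\sum_(j < d) m (tvar j i))%N.

Definition homog_of (A : comNzRingType) (d r : nat) (b : 'I_r -> nat)
  (p : {mpoly A[tidx d r]}) : Prop :=
  forall m, m \in msupp p -> forall i, tmdeg m i = b i.

Definition ltdeg (r : nat) (b c : 'I_r -> nat) : Prop :=
  (forall i, (b i <= c i)%N) /\ exists i, b i != c i.

Inductive gen_alg (A : comNzRingType) (n : nat) (P : {mpoly A[n]} -> Prop)
  : {mpoly A[n]} -> Prop :=
  | gen_alg_gen p : P p -> gen_alg P p
  | gen_alg_one : gen_alg P 1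
  | gen_alg_add p q : gen_alg P p -> gen_alg P q -> gen_alg P (p + q)
  | gen_alg_mul p q : gen_alg P p -> gen_alg P q -> gen_alg P (p * q)
  | gen_alg_scale (a : A) p : gen_alg P p -> gen_alg P (a *: p).

Definition Gamma_lt (A : comNzRingType) (d r : nat) (c : 'I_r -> nat)
  (p : {mpoly A[tidx d r]}) : Prop :=
  gen_alg (fun q : {mpoly A[tidx d r]} =>
             symmetric_tensor q /\ exists b, ltdeg b c /\ homog_of b q) p.

(* Main.v *)
Require Import Defs.
From HB Require Import structures.
From mathcomp Require Import all_boot all_algebra fingroup perm.
From mathcomp Require Import mpoly.
From mathcomp Require Import ring zify.
Set Implicit Arguments. Unset Strict Implicit. Unset Printing Implicit Defensive.
Import GRing.Theory.
Local Open Scope ring_scope.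

Section Generic.
Variable R : comNzRingType.
Variable d : nat.
Implicit Types (y : 'I_d -> R).

Definition Esym y n := \sum_(S : {set 'I_d} | #|S| == n) \prod_(j in S) y j.
Definition Psum y i := \sum_(j < d) y j ^+ i.
Definition Aterm y e n := \sum_(S : {set 'I_d} | #|S| == n)
   \sum_(j | j \notin S) (\prod_(l in S) y l) * y j ^+ e.
Definition Bterm y e n := \sum_(S : {set 'I_d} | #|S| == n)
   \sum_(j in S) (\prod_(l in S :\ j) y l) * y j ^+ e.

Lemma EP y n i : Esym y n * Psum y i = Aterm y i n + Bterm y i.+1 n.
Proof.
rewrite /Esym /Aterm /Bterm mulr_suml -big_split /=; apply: eq_bigr => S _.
rewrite /Psum mulr_sumr (bigID (fun j => j \in S)) /= addrC; congr (_ + _).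
apply: eq_bigr => j jS; rewrite (big_setD1 j jS) /= exprS.
by rewrite (mulrC (y j)) -mulrA.
Qed.

Lemma B1 y n : Bterm y 1 n = n%:R * Esym y n.
Proof.
rewrite /Bterm /Esym mulr_sumr; apply: eq_bigr => S /eqP cS.
transitivity (\sum_(j in S) \prod_(l in S) y l).
  by apply: eq_bigr => j jS; rewrite ?expr1 (big_setD1 j jS) /= mulrC.
by rewrite sumr_const cS mulr_natl.
Qed.

Lemma B0 y e : Bterm y e 0 = 0.
Proof.
rewrite /Bterm big1 // => S /eqP /cards0_eq ->; exact: big_set0.
Qed.

Lemma BA y e n : Bterm y e n.+1 = Aterm y e n.
Proof.
rewrite /Bterm /Aterm.
rewrite (exchange_big_dep xpredT) //= [RHS](exchange_big_dep xpredT) //=.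
apply: eq_bigr => j _.
rewrite (reindex_onto (fun T => j |: T) (fun S => S :\ j)); last first.
  by move=> S /andP[_ jS]; rewrite setD1K.
apply: eq_big => [T|T /andP[/andP[_ _] /eqP ->]] //.
rewrite setU11 andbT cardsU1.
case jT: (j \in T) => /=.
  rewrite andbF; apply/negbTE; apply/negP => /andP[_ /eqP E].
  by move: jT; rewrite -E !inE eqxx.
by rewrite add1n eqSS setU1K ?jT // eqxx andbT.
Qed.

Lemma Newton y n :
  n%:R * Esym y n = \sum_(i < n) (-1) ^+ i * (Esym y (n - i.+1)%N * Psum y i.+1).
Proof.
case: n => [|n]; first by rewrite mul0r big_ord0.
rewrite (eq_bigr (fun i : 'I_n.+1 => (-1) ^+ i * Aterm y i.+1 (n - i)%N
     + (-1) ^+ i * Bterm y i.+2 (n - i)%N)); last first.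
  by move=> i _; rewrite subSS EP mulrDr.
rewrite big_split /= big_ord_recl big_ord_recr /= subnn B0 mulr0 addr0.
rewrite subn0 expr0 mul1r -B1 -BA -addrA [X in _ + X]addrC -big_split /=.
rewrite big1 ?addr0 // => i _.
rewrite /bump leq0n add1n -(subnSK (ltn_ord i)) BA exprS mulN1r mulNr.
by rewrite subrr.
Qed.

Lemma E0 y : Esym y 0 = 1.
Proof.
rewrite /Esym (big_pred1 set0) ?big_set0 // => S /=; by rewrite cards_eq0.
Qed.

Lemma Egt y n : (d < n)%N -> Esym y n = 0.
Proof.
move=> dn; rewrite /Esym big_pred0 // => S; apply/negbTE.
apply: contraTneq dn => <-; rewrite -leqNgt.
by apply: leq_trans (max_card _) _; rewrite card_ord.
Qed.

Lemma Psum_pow y m i : Psum (fun j => y j ^+ m) i = Psum y (m * i).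
Proof. by apply: eq_bigr => j _; rewrite exprM. Qed.

Lemma sign_sq n : (-1) ^+ n * (-1) ^+ n = 1 :> R.
Proof. by rewrite -exprMn mulrNN mulr1 expr1n. Qed.

End Generic.

Lemma Esym_morph (R R' : comNzRingType) d (f : {rmorphism R -> R'}) (y : 'I_d -> R) n :
  f (Esym y n) = Esym (fun j => f (y j)) n.
Proof.
rewrite /Esym rmorph_sum; apply: eq_bigr => S _; exact: rmorph_prod.
Qed.

Lemma Esym_perm (R : comNzRingType) d (s : 'S_d) (y : 'I_d -> R) n :
  Esym (fun j => y (s j)) n = Esym y n.
Proof.
rewrite /Esym [RHS](reindex_inj (imset_inj (@perm_inj _ s))) /=.
apply: eq_big => S.
  by rewrite card_imset //; exact: perm_inj.
move=> _; rewrite big_imset //=; apply: in2W; exact: perm_inj.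
Qed.

Lemma Esym_ext (R : comNzRingType) d (y y' : 'I_d -> R) n :
  (forall j, y j = y' j) -> Esym y n = Esym y' n.
Proof. by move=> h; apply: eq_bigr => S _; apply: eq_bigr => j _. Qed.

Section GenAlg.
Variables (A : comNzRingType) (n : nat) (P : {mpoly A[n]} -> Prop).
Local Notation G := (gen_alg P).

Lemma ga_scale1 (a : A) : G (a *: 1). Proof. by apply: gen_alg_scale; apply: gen_alg_one. Qed.
Lemma ga0 : G 0. Proof. by rewrite -(scale0r (1 : {mpoly A[n]})); apply: ga_scale1. Qed.
Lemma ga_int (z : int) : G z%:~R.
Proof. by rewrite -[z%:~R]mulr1 -(rmorph_int (@mpolyC n A)) mul_mpolyC; apply: ga_scale1. Qed.
Lemma ga_nat (k : nat) : G k%:R.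
Proof. exact: (ga_int k). Qed.
Lemma ga_opp p : G p -> G (- p).
Proof. by move=> h; rewrite -scaleN1r; apply: gen_alg_scale. Qed.
Lemma ga_sub p q : G p -> G q -> G (p - q).
Proof. by move=> hp hq; apply: gen_alg_add => //; apply: ga_opp. Qed.
Lemma ga_sum I (r : seq I) (Q : pred I) F : (forall i, Q i -> G (F i)) -> G (\sum_(i <- r | Q i) F i).
Proof. move=> h; apply: big_ind => //; [exact: ga0 | exact: gen_alg_add]. Qed.
Lemma ga_prod I (r : seq I) (Q : pred I) F : (forall i, Q i -> G (F i)) -> G (\prod_(i <- r | Q i) F i).
Proof. move=> h; apply: big_ind => //; [exact: gen_alg_one | exact: gen_alg_mul]. Qed.
Lemma ga_exp p k : G p -> G (p ^+ k).
Proof. by move=> h; elim: k => [|k ih]; [rewrite expr0; apply: gen_alg_one | rewrite exprS; apply: gen_alg_mul]. Qed.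
Lemma ga_sign k : G ((-1) ^+ k). Proof. by apply: ga_exp; apply: ga_opp; apply: gen_alg_one. Qed.
End GenAlg.

Lemma ga_mono (A : comNzRingType) n (P Q : {mpoly A[n]} -> Prop) p :
  (forall q, P q -> Q q) -> gen_alg P p -> gen_alg Q p.
Proof.
move=> PQ; elim => *; by [apply: gen_alg_gen; apply: PQ | apply: gen_alg_one
  | apply: gen_alg_add | apply: gen_alg_mul | apply: gen_alg_scale].
Qed.


Section IntPart.
Variable d : nat.
Local Notation Ri := {mpoly int[d]}.
Definition Xv : 'I_d -> Ri := fun j => 'X_j.
Definition Pgen N (p : Ri) := exists i, (0 < i < N)%N /\ p = Esym Xv i.
Local Notation G N := (gen_alg (Pgen N)).
Local Notation St := [tuple mesym d int i.+1 | i < d].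

Definition Low N (t : Ri) := forall mm, mm \in msupp t -> forall i : 'I_d, (N <= i.+1)%N -> mm i = 0%N.

Lemma Pgen_mono N N' p : (N <= N')%N -> G N p -> G N' p.
Proof.
move=> le; apply: ga_mono => q [i [/andP[i0 iN] ->]]; exists i.
by rewrite i0 (leq_trans iN le).
Qed.

Lemma Egen N i : (0 < i < N)%N -> G N (Esym Xv i).
Proof. by move=> h; apply: gen_alg_gen; exists i. Qed.

Lemma Low_gen N p : G N p -> exists t, Low N t /\ p = t \mPo St.
Proof.
elim=> {p}.
- move=> p [i [/andP[i0 iN] ->]].
  case: (leqP i d) => id; last first.
    exists 0; split; first by move=> mm; rewrite msupp0.
    by rewrite Egt // comp_mpoly0.
  case: i i0 iN id => // j _ jN jd.
  exists 'X_(Ordinal jd); split.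
    move=> mm; rewrite msuppX inE => /eqP -> i iN; rewrite mnm1E.
    case: eqP => // E; move: iN; rewrite -E /= leqNgt.
    by rewrite jN.
  by rewrite comp_mpolyXU -tnth_nth tnth_mktuple.
- exists 1; split; last by rewrite comp_mpoly1.
  by move=> mm; rewrite msupp1 inE => /eqP -> i _; rewrite mnm0E.
- move=> p q _ [t1 [l1 ->]] _ [t2 [l2 ->]]; exists (t1 + t2); split; last by rewrite comp_mpolyD.
  move=> mm /msuppD_le; rewrite mem_cat => /orP[] h; [exact: l1 | exact: l2].
- move=> p q _ [t1 [l1 ->]] _ [t2 [l2 ->]]; exists (t1 * t2); split; last by rewrite rmorphM.
  move=> mm /msuppM_le /allpairsP [[m1 m2] /= [h1 h2 ->]] i iN.
  by rewrite mnmDE (l1 _ h1 _ iN) (l2 _ h2 _ iN).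
- move=> a p _ [t [l ->]]; exists (a *: t); split; last by rewrite comp_mpolyZ.
  by move=> mm /msuppZ_le; apply: l.
Qed.

Lemma gen_Low N t : Low N t -> G N (t \mPo St).
Proof.
move=> l; rewrite comp_mpolyEX big_seq; apply: ga_sum => mm mt; apply: gen_alg_scale.
rewrite comp_mpolyX; apply: ga_prod => i _.
case: (posnP (mm i)) => [->|mi]; first by rewrite expr0; apply: gen_alg_one.
apply: ga_exp; rewrite tnth_mktuple; apply: Egen => /=.
rewrite ltnNge; apply/negP => h.
by move: mi; rewrite (l mm mt i h).
Qed.

Lemma sat N k p : (0 < k)%N -> p \is symmetric -> G N (k%:R * p) -> G N p.
Proof.
move=> k0 sp /Low_gen [t1 [l1 e1]].
case: (sym_fundamental sp) => t0 [e0' _].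
have e0 : t0 \mPo St = p by exact: e0'.
have ek : k%:R * t0 = t1.
  apply: msym_fundamental_un; change ((k%:R * t0) \mPo St = t1 \mPo St).
  rewrite rmorphM rmorph_nat -e1; congr (_ * _); exact: e0.
rewrite -e0; apply: gen_Low => mm mt i iN; apply: (l1 mm _ i iN).
rewrite -ek -[_ \in _]negbK -mcoeff_eq0 mulr_natl mcoeffMn Num.Theory.mulrn_eq0 negb_or -lt0n k0 /=.
by rewrite mcoeff_eq0 negbK.
Qed.

Lemma Pow_low n : (0 < n)%N ->
  G n (Psum Xv n - ((-1) ^+ n.-1 * n%:R) * Esym Xv n).
Proof.
elim/ltn_ind: n => n IH n0.
have Pin j : (0 < j < n)%N -> G n (Psum Xv j).
  move=> /andP[j0 jn]; have h := IH j jn j0.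
  rewrite -(subrK (((-1) ^+ j.-1 * j%:R) * Esym Xv j) (Psum Xv j)).
  apply: gen_alg_add; first exact: Pgen_mono (ltnW jn) h.
  apply: gen_alg_mul; first by apply: gen_alg_mul; [apply: ga_sign | apply: ga_nat].
  by apply: Egen; rewrite j0 jn.
case: n n0 IH Pin => // n _ IH Pin.
have H := Newton Xv n.+1.
rewrite big_ord_recr /= subnn E0 mul1r in H.
set Sm := \sum_(i < n) _ in H.
set s := (-1) ^+ n in H *.
have ss : s * s = 1 by rewrite /s sign_sq.
have -> : Psum Xv n.+1 - s * n.+1%:R * Esym Xv n.+1 = s * (- Sm).
  transitivity (s * s * Psum Xv n.+1 - s * (n.+1%:R * Esym Xv n.+1)).
    by rewrite ss mul1r mulrA.
  by rewrite H; ring.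
apply: gen_alg_mul; first exact: ga_sign.
apply: ga_opp; apply: ga_sum => i _.
apply: gen_alg_mul; first exact: ga_sign.
apply: gen_alg_mul.
  by apply: Egen; rewrite subSS subn_gt0 ltn_ord /= ltnS leq_subr.
by apply: Pin; rewrite /= ltnS ltn_ord.
Qed.

Lemma Pin N j : (0 < j < N)%N -> G N (Psum Xv j).
Proof.
move=> /andP[j0 jn]; have h := Pow_low j0.
rewrite -(subrK (((-1) ^+ j.-1 * j%:R) * Esym Xv j) (Psum Xv j)).
apply: gen_alg_add; first exact: Pgen_mono (ltnW jn) h.
apply: gen_alg_mul; first by apply: gen_alg_mul; [apply: ga_sign | apply: ga_nat].
by apply: Egen; rewrite j0 jn.
Qed.

Lemma msymX1 (s : 'S_d) (j : 'I_d) : msym s ('X_j : Ri) = 'X_(s j).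
Proof. by rewrite /msym mmapX mmap1U. Qed.

Lemma Esym_sym m n : Esym (fun j => Xv j ^+ m) n \is symmetric.
Proof.
apply/issymP => s; rewrite Esym_morph.
rewrite -(Esym_perm s (fun j => Xv j ^+ m)); apply: Esym_ext => j.
rewrite rmorphXn /Xv; congr (_ ^+ _); exact: msymX1.
Qed.

Lemma Ez_low m k : (0 < m)%N -> (0 < k)%N ->
  G (k * m) (Esym (fun j => Xv j ^+ m) k - ((-1) ^+ (k * m - k) * m%:R) * Esym Xv (k * m)).
Proof.
move=> m0; elim/ltn_ind: k => k IH k0.
apply: (sat k0).
  apply: rpredB; first exact: Esym_sym.
  apply: rpredM; last exact: (Esym_sym 1).
  by rewrite rpredM ?rpred_nat // rpredX // rpredN rpred1.
case: k k0 IH => // k _ IH.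
have H := Newton (fun j => Xv j ^+ m) k.+1.
rewrite big_ord_recr /= subnn E0 mul1r Psum_pow in H.
set Sm := \sum_(i < k) _ in H.
have mk0 : (0 < m * k.+1)%N by rewrite muln_gt0 m0.
have Pw := Pow_low mk0.
rewrite [(m * k.+1)%N]mulnC in H Pw.
set t := (k.+1 * m)%N in H Pw *.
have tk : (k.+1 <= t)%N by rewrite /t leq_pmulr.
set u := (-1) ^+ k in H *.
set v := (-1) ^+ t.-1 in Pw.
set w := (-1) ^+ (t - k.+1).
have sgn : u * v = w.
  rewrite /u /v /w -exprD (_ : (k + t.-1)%N = (t - k.+1) + (k + k))%N; last by lia.
  by rewrite exprD exprD sign_sq mulr1.
have -> : k.+1%:R * (Esym (fun j => Xv j ^+ m) k.+1 - w * m%:R * Esym Xv t)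
   = Sm + u * (Psum Xv t - v * t%:R * Esym Xv t).
  rewrite mulrBr H /t natrM -sgn; ring.
apply: gen_alg_add; last by apply: gen_alg_mul; [apply: ga_sign | exact: Pw].
apply: ga_sum => i _.
apply: gen_alg_mul; first exact: ga_sign.
apply: gen_alg_mul; last first.
  rewrite Psum_pow; apply: Pin; rewrite /t muln_gt0 m0 /= mulnC ltn_pmul2r // ltnS ltn_ord //.
rewrite subSS.
have ik : (k - i < k.+1)%N by rewrite ltnS leq_subr.
have i0 : (0 < k - i)%N by rewrite subn_gt0 ltn_ord.
have h := IH _ ik i0.
rewrite -(subrK ((-1) ^+ ((k - i) * m - (k - i))%N * m%:R * Esym Xv ((k - i) * m)%N)
  (Esym (fun j => Xv j ^+ m) (k - i)%N)).
apply: gen_alg_add.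
  apply: Pgen_mono h; rewrite /t leq_pmul2r //; exact: ltnW.
apply: gen_alg_mul; first by apply: gen_alg_mul; [apply: ga_sign | apply: ga_nat].
apply: Egen; rewrite muln_gt0 i0 m0 /= /t ltn_pmul2r //.
Qed.
End IntPart.

Section Tensor.
Variables (A : comNzRingType) (d r : nat).
Local Notation T := {mpoly A[tidx d r]}.

Lemma homog_ext (b b' : 'I_r -> nat) (p : T) :
  (forall i, b i = b' i) -> homog_of b p -> homog_of b' p.
Proof. by move=> e h mm mp i; rewrite -e h. Qed.

Lemma homog0 b : homog_of b (0 : T).
Proof. by move=> mm; rewrite msupp0. Qed.

Lemma homogD b (p q : T) : homog_of b p -> homog_of b q -> homog_of b (p + q).
Proof. by move=> hp hq mm /msuppD_le; rewrite mem_cat => /orP[]; [apply: hp | apply: hq]. Qed.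

Lemma tmdegD (m1 m2 : 'X_{1..tidx d r}) i : tmdeg (m1 + m2) i = (tmdeg m1 i + tmdeg m2 i)%N.
Proof. by rewrite /tmdeg -big_split /=; apply: eq_bigr => j _; rewrite mnmDE. Qed.

Lemma tmdeg0 i : tmdeg (0%MM : 'X_{1..tidx d r}) i = 0%N.
Proof. by rewrite /tmdeg big1 // => j _; rewrite mnm0E. Qed.

Lemma homogM b1 b2 (p q : T) : homog_of b1 p -> homog_of b2 q ->
  homog_of (fun i => b1 i + b2 i)%N (p * q).
Proof.
move=> hp hq mm /msuppM_le /allpairsP [[m1 m2] /= [h1 h2 ->]] i.
by rewrite tmdegD (hp _ h1) (hq _ h2).
Qed.

Lemma homog1 : homog_of (fun _ => 0%N) (1 : T).
Proof. by move=> mm; rewrite msupp1 inE => /eqP -> i; rewrite tmdeg0. Qed.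

Lemma homog_sum I (s : seq I) (P : pred I) (F : I -> T) b :
  (forall x, P x -> homog_of b (F x)) -> homog_of b (\sum_(x <- s | P x) F x).
Proof. by move=> h; apply: big_ind => //; [exact: homog0 | exact: homogD]. Qed.

Lemma homog_prod I (s : seq I) (P : pred I) (F : I -> T) (B : I -> 'I_r -> nat) :
  (forall x, P x -> homog_of (B x) (F x)) ->
  homog_of (fun i => \sum_(x <- s | P x) B x i)%N (\prod_(x <- s | P x) F x).
Proof.
move=> h; elim: s => [|x s ih].
  by rewrite big_nil; apply: homog_ext homog1 => i; rewrite big_nil.
rewrite big_cons; case: ifP => Px.
  by apply: homog_ext (homogM (h x Px) ih) => i; rewrite big_cons Px.
by apply: homog_ext ih => i; rewrite big_cons Px.
Qed.

Lemma homogX (p : T) b n : homog_of b p -> homog_of (fun i => n * b i)%N (p ^+ n).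
Proof.
move=> h; elim: n => [|n ih].
  by rewrite expr0; apply: homog_ext homog1 => i; rewrite mul0n.
by rewrite exprS; apply: homog_ext (homogM h ih) => i; rewrite mulSn.
Qed.

Lemma tvar_inj : injective (fun x : 'I_d * 'I_r => tvar x.1 x.2).
Proof. by move=> [j i] [j' i'] /= /enum_rank_inj. Qed.

Lemma homog_var (j : 'I_d) (i0 : 'I_r) : homog_of (fun i => (i0 == i) : nat) ('X_(tvar j i0) : T).
Proof.
move=> mm; rewrite msuppX inE => /eqP -> i; rewrite /tmdeg.
rewrite (bigD1 j) //= mnm1E big1 ?addn0.
  case: eqP => [/(@tvar_inj (j, i0) (j, i)) [->]|ne]; first by rewrite eqxx.
  by case: eqP => // e; case: ne; rewrite e.
move=> j' ne; rewrite mnm1E; case: eqP => // /(@tvar_inj (j, i0) (j', i)) [e _].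
by move: ne; rewrite e eqxx.
Qed.

Lemma emb_X (j : 'I_d) (alpha : 'X_{1..r}) :
  emb j ('X_[alpha] : {mpoly A[r]}) = \prod_(i0 < r) ('X_(tvar j i0) : T) ^+ alpha i0.
Proof. by rewrite /emb comp_mpolyX; apply: eq_bigr => i0 _; rewrite tnth_mktuple. Qed.

Lemma homog_emb (j : 'I_d) (alpha : 'X_{1..r}) : homog_of alpha (emb j ('X_[alpha] : {mpoly A[r]})).
Proof.
rewrite emb_X.
have H : homog_of (fun i => \sum_(i0 < r) alpha i0 * (i0 == i))%N
   (\prod_(i0 < r) ('X_(tvar j i0) : T) ^+ alpha i0).
  by apply: homog_prod => i0 _; apply: homogX; apply: homog_var.
apply: homog_ext H => i.
rewrite (bigD1 i) //= eqxx muln1 big1 ?addn0 // => i0 /negbTE ->; by rewrite muln0.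
Qed.

Lemma comp_comp n N (p : {mpoly A[n]}) (t1 : n.-tuple {mpoly A[N]}) (t2 : N.-tuple {mpoly A[N]}) :
  (p \mPo t1) \mPo t2 = p \mPo [tuple tnth t1 i \mPo t2 | i < n].
Proof.
rewrite [p \mPo t1]comp_mpolyE raddf_sum [RHS]comp_mpolyE /=; apply: eq_bigr => mm _.
rewrite comp_mpolyZ rmorph_prod; congr (_ *: _); apply: eq_bigr => i _.
by rewrite rmorphXn tnth_mktuple.
Qed.

Lemma perm_emb (s : 'S_d) (j : 'I_d) (f : {mpoly A[r]}) :
  perm_tensor s (emb j f) = emb (s j) f.
Proof.
rewrite /perm_tensor /emb comp_comp; congr (_ \mPo _); apply: eq_from_tnth => i.
by rewrite !tnth_mktuple comp_mpolyXU -tnth_nth tnth_mktuple /tvar enum_rankK.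
Qed.

Lemma Esym_comp n N (y : 'I_d -> {mpoly A[n]}) (t : n.-tuple {mpoly A[N]}) k :
  (Esym y k) \mPo t = Esym (fun j => y j \mPo t) k.
Proof.
rewrite /Esym rmorph_sum; apply: eq_bigr => S _; exact: rmorph_prod.
Qed.

Lemma sym_gamma (f : {mpoly A[r]}) k : symmetric_tensor (gamma_times_one d f k).
Proof.
move=> s; change (perm_tensor s (Esym (fun j => emb j f) k) = Esym (fun j => emb j f) k).
rewrite /perm_tensor Esym_comp.
rewrite -[RHS](Esym_perm s); apply: Esym_ext => j; exact: perm_emb.
Qed.
End Tensor.

Section Final.
Variables (A : comNzRingType) (d r : nat) (alpha : 'X_{1..r}).
Local Notation T := {mpoly A[tidx d r]}.
Definition hX (j : 'I_d) : T := emb j ('X_[alpha] : {mpoly A[r]}).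
Local Notation psi := (mmap (S:=T) intr hX).

Lemma psiX j : psi (@Xv d j) = hX j.
Proof. by rewrite /Xv mmapX mmap1U. Qed.

Lemma psiE (y : 'I_d -> {mpoly int[d]}) n : psi (Esym y n) = Esym (fun j => psi (y j)) n.
Proof. exact: Esym_morph. Qed.

Lemma transfer N c p : gen_alg (Pgen N) p ->
  (forall i, (0 < i < N)%N -> Gamma_lt c (psi (Esym (@Xv d) i))) ->
  Gamma_lt c (psi p).
Proof.
move=> G hg; elim: G => {p}.
- by move=> p [i [hi ->]]; apply: hg.
- by rewrite rmorph1; apply: gen_alg_one.
- by move=> p q _ hp _ hq; rewrite rmorphD; apply: gen_alg_add.
- by move=> p q _ hp _ hq; rewrite rmorphM; apply: gen_alg_mul.
- move=> a p _ hp; rewrite mmapZ; apply: gen_alg_mul => //; exact: ga_int.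
Qed.

Lemma gen_gamma K i : (0 < i < K)%N ->
  Gamma_lt (fun i' => K * alpha i')%N (psi (Esym (@Xv d) i)).
Proof.
move=> /andP[i0 iK]; rewrite psiE.
rewrite (Esym_ext (y' := hX)); last by move=> j; exact: psiX.
case: (eqVneq alpha 0%MM) => [a0|nz].
  rewrite /Esym; apply: ga_sum => S _; apply: ga_prod => j _.
  by rewrite /hX a0 mpolyX0 /emb comp_mpoly1; apply: gen_alg_one.
apply: gen_alg_gen; split; first exact: (@sym_gamma A d r ('X_[alpha]) i).
exists (fun i' => i * alpha i')%N; split.
  split; first by move=> i'; rewrite leq_mul2r (ltnW iK) orbT.
  case: (pickP (fun i0 => alpha i0 != 0%N)) => [i1 ai1|none].
    by exists i1; rewrite eqn_pmul2r ?lt0n // ltn_eqF.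
  exfalso; move: nz; apply/negP; rewrite negbK; apply/eqP/mnmP => i1.
  by rewrite mnm0E; move: (none i1) => /negbFE/eqP.
apply: homog_sum => S /eqP cS.
have H : homog_of (fun i2 => \sum_(j in S) alpha i2)%N (\prod_(j in S) hX j).
  by apply: homog_prod => j _; exact: homog_emb.
apply: homog_ext H => i'.
by rewrite sum_nat_const cS.
Qed.

Lemma psiEz m k : psi (Esym (fun j => @Xv d j ^+ m) k) =
  gamma_times_one d ('X_[alpha] ^+ m : {mpoly A[r]}) k.
Proof.
rewrite psiE; apply: Esym_ext => j.
rewrite rmorphXn; transitivity (hX j ^+ m); first by congr (_ ^+ _); exact: psiX.
by rewrite /hX /emb rmorphXn.
Qed.

Lemma psiE1 k : psi (Esym (@Xv d) k) = gamma_times_one d ('X_[alpha] : {mpoly A[r]}) k.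
Proof. by rewrite psiE; apply: Esym_ext => j; rewrite psiX. Qed.
End Final.

Unset Implicit Arguments.

Theorem proposition7p5 (A : comNzRingType) (r d : nat) (hr : (1 <= r)%N)
  (hd : (1 <= d)%N) (alpha : 'X_{1..r}) (k m : nat) (hk : (1 <= k)%N)
  (hm : (1 <= m)%N) (hkd : (k <= d)%N) :
  ((k * m <= d)%N ->
     Gamma_lt (fun i => (k * m * alpha i)%N)
       (gamma_times_one d ('X_[alpha] ^+ m : {mpoly A[r]}) k
        - ((-1) ^+ (k * m - k) * m%:R) *:
            gamma_times_one d ('X_[alpha] : {mpoly A[r]}) (k * m)))
  /\
  ((d < k * m)%N ->
     Gamma_lt (fun i => (k * m * alpha i)%N)
       (gamma_times_one d ('X_[alpha] ^+ m : {mpoly A[r]}) k)).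
Proof.
have Gi := @Ez_low d m k hm hk.
have tr := fun p (G : gen_alg (Pgen (k * m)) p) =>
  transfer (A := A) (r := r) (alpha := alpha) (c := fun i => (k * m * alpha i)%N) G
    (fun i hi => gen_gamma A d alpha hi).
split => [_|dlt].
  set W := (Esym _ k - _) in Gi.
  have -> : gamma_times_one d ('X_[alpha] ^+ m : {mpoly A[r]}) k
        - ((-1) ^+ (k * m - k) * m%:R) *:
            gamma_times_one d ('X_[alpha] : {mpoly A[r]}) (k * m)
     = mmap (S := {mpoly A[tidx d r]}) intr (hX A alpha) W.
    rewrite /W rmorphB rmorphM -mul_mpolyC; congr (_ - _ * _).
    - by rewrite -psiEz.
    - by rewrite rmorphM rmorphXn rmorphN rmorph1 rmorph_nat /=
        rmorphM rmorphXn rmorphN rmorph1 rmorph_nat.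
    - by rewrite -psiE1.
  exact: tr.
rewrite (Egt _ dlt) mulr0 subr0 in Gi.
rewrite -psiEz; exact: tr.
Qed.
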